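(* Let $A$ be a set, $I$ a set of labels, $\{\to_\alpha\mid\alpha\in I\}$ a family of binary relations on $A$ and $\{\vdash\!\dashv_\alpha\mid\alpha\in I\}$ a family of symmetric binary relations on $A$; put $\to=\bigcup_{\alpha}\to_\alpha$ and $\sim=(\bigcup_\alpha \vdash\!\dashv_\alpha)^*$. If the labeled ARS is peak-and-cliff decreasing, then it is Church–Rosser modulo $\sim$, i.e. $\Leftrightarrow^*\subseteq \to^*\cdot\sim\cdot\leftarrow^*$, where $\Leftrightarrow=\leftarrow\cup\to\cup\sim$.
   Context: For $J\subseteq I$ write $\to_J=\bigcup_{\gamma\in J}\to_\gamma$ and $\Leftrightarrow_J = \leftarrow_J\cup\to_J\cup\bigcup_{\gamma\in J}\vdash\!\dashv_\gamma$; $\leftarrow_\beta$ is the inverse of $\to_\beta$ and $R^=$ the reflexive closure. The labeled ARS is peak-and-cliff decreasing if there is a well-founded order $>$ on $I$ such that for all $\alpha,\beta\in I$: $\leftarrow_\alpha\cdot\to_\beta \subseteq (\Leftrightarrow_{\vee\alpha\beta})^*$ and $\leftarrow_\alpha\cdot\vdash\!\dashv_\beta\subseteq (\Leftrightarrow_{\vee\alpha})^*\cdot \leftarrow_\beta^{=}$, where $\vee\alpha\beta=\{\gamma\in I\mid \alpha>\gamma \text{ or } \beta>\gamma\}$ and $\vee\alpha=\vee\alpha\alpha$. *)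

(* Defs.v *)
From Stdlib Require Export Relations.

Section LARS.
Variables (A I : Type) (step : I -> relation A) (cliff : I -> relation A).

Definition stepJ (J : I -> Prop) : relation A :=
  fun x y => exists g, J g /\ step g x y.

Definition convJ (J : I -> Prop) : relation A :=
  fun x y => stepJ J y x \/ stepJ J x y \/ exists g, J g /\ cliff g x y.

Definition comp (R S : relation A) : relation A :=
  fun x z => exists y, R x y /\ S y z.

Definition reflc (R : relation A) : relation A :=
  fun x y => x = y \/ R x y.

Definition vee2 (gt : I -> I -> Prop) (a b : I) : I -> Prop :=
  fun g => gt a g \/ gt b g.
Definition vee1 (gt : I -> I -> Prop) (a : I) : I -> Prop := vee2 gt a a.

Definition wf_order (gt : I -> I -> Prop) : Prop :=
  (forall a, ~ gt a a) /\
  (forall a b c, gt a b -> gt b c -> gt a c) /\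
  well_founded (fun x y => gt y x).

Definition peak_and_cliff_decreasing : Prop :=
  exists gt : I -> I -> Prop, wf_order gt /\
    forall a b : I,
      inclusion A (comp (transp A (step a)) (step b))
                  (clos_refl_trans A (convJ (vee2 gt a b))) /\
      inclusion A (comp (transp A (step a)) (cliff b))
                  (comp (clos_refl_trans A (convJ (vee1 gt a)))
                        (reflc (transp A (step b)))).

Definition arrow : relation A := fun x y => exists a, step a x y.
Definition cliffU : relation A := fun x y => exists a, cliff a x y.
Definition simeq : relation A := clos_refl_trans A cliffU.
Definition conv : relation A := fun x y => arrow y x \/ arrow x y \/ simeq x y.

Definition church_rosser_modulo : Prop :=
  inclusion A (clos_refl_trans A conv)
    (comp (clos_refl_trans A arrow)
          (comp simeq (transp A (clos_refl_trans A arrow)))).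
End LARS.

(* Main.v *)
Require Import Defs.
From Stdlib Require Import List Permutation Sorted Wellfounded Lia.
Import ListNotations.

Definition mstep {I : Type} (gt : I -> I -> Prop) (N M : list I) : Prop :=
  exists a M0 K, Permutation M (a::M0) /\ Permutation N (K ++ M0) /\ Forall (gt a) K.

Lemma Acc_perm {I : Type} (gt : I -> I -> Prop) M M' :
  Acc (mstep gt) M -> Permutation M M' -> Acc (mstep gt) M'.
Proof.
  intros H P; constructor; intros N [a [M0 [K [H1 [H2 H3]]]]].
  apply (Acc_inv H). exists a, M0, K. split; [eapply perm_trans; eauto|auto].
Qed.

Lemma perm_cons_split {I : Type} (a c : I) M M1 :
  Permutation (a::M) (c::M1) ->
  (a = c /\ Permutation M M1) \/ exists M2, Permutation M (c::M2) /\ Permutation M1 (a::M2).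
Proof.
  intros P. assert (Hin: In c (a::M)).
  { apply Permutation_in with (c::M1); [apply Permutation_sym; auto| left; auto]. }
  destruct Hin as [E|Hin].
  - subst. left. split; auto. eapply Permutation_cons_inv; eauto.
  - right. apply in_split in Hin. destruct Hin as [l1 [l2 E]]. subst M. exists (l1++l2). split.
    + apply Permutation_sym, Permutation_middle.
    + apply Permutation_cons_inv with c. eapply perm_trans. apply Permutation_sym; exact P.
      eapply perm_trans. apply perm_skip. apply Permutation_sym, Permutation_middle. apply perm_swap.
Qed.

Lemma add_small {I : Type} (gt : I -> I -> Prop) a :
  (forall b, gt a b -> forall M, Acc (mstep gt) M -> Acc (mstep gt) (b::M)) ->
  forall K, Forall (gt a) K -> forall M, Acc (mstep gt) M -> Acc (mstep gt) (K ++ M).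
Proof. intros Hb K HK. induction HK; simpl; auto. Qed.

Lemma key {I : Type} (gt : I -> I -> Prop) a :
  (forall b, gt a b -> forall M, Acc (mstep gt) M -> Acc (mstep gt) (b::M)) ->
  forall M, Acc (mstep gt) M -> Acc (mstep gt) (a::M).
Proof.
  intros Hb M HM. induction HM as [M HM IH]. constructor.
  intros N [c [M1 [K [P1 [P2 HK]]]]].
  destruct (perm_cons_split _ _ _ _ P1) as [[E P]|[M2 [P3 P4]]].
  - subst c. apply Acc_perm with (K++M).
    + apply (add_small gt a Hb K HK). constructor; exact HM.
    + eapply perm_trans. apply Permutation_app_head; exact P. apply Permutation_sym; exact P2.
  - apply Acc_perm with (a::(K++M2)).
    + apply IH. exists c, M2, K. split; auto.
    + eapply perm_trans. apply Permutation_middle. eapply perm_trans.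
      apply Permutation_app_head. apply Permutation_sym; exact P4. apply Permutation_sym; exact P2.
Qed.

Lemma mstep_wf {I : Type} (gt : I -> I -> Prop) :
  well_founded (fun x y => gt y x) -> well_founded (mstep gt).
Proof.
  intros wf. assert (H: forall a M, Acc (mstep gt) M -> Acc (mstep gt) (a::M)).
  { intro a. induction (wf a) as [a _ IHa]. apply key. intros b Hab. apply IHa. exact Hab. }
  intro M. induction M.
  - constructor. intros N [c [M1 [K [P1 _]]]]. apply Permutation_nil in P1. discriminate.
  - apply H; auto.
Qed.

Lemma ms_replace {I : Type} (gt : I -> I -> Prop) a K X Y :
  Forall (gt a) K -> mstep gt (X ++ K ++ Y) (X ++ a :: Y).
Proof.
  intros HK. exists a, (X++Y), K. split; [|split; auto].
  - apply Permutation_sym, Permutation_middle.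
  - apply Permutation_app_swap_app.
Qed.

Lemma split_vee {I : Type} (gt : I -> I -> Prop) a b K :
  Forall (fun g => gt a g \/ gt b g) K ->
  exists Ka Kb, Permutation K (Ka++Kb) /\ Forall (gt a) Ka /\ Forall (gt b) Kb.
Proof.
  intros H. induction H as [|g K [Hg|Hg] _ [Ka [Kb [P [Fa Fb]]]]].
  - exists [], []. auto.
  - exists (g::Ka), Kb. simpl. split; auto.
  - exists Ka, (g::Kb). split; auto. eapply perm_trans. apply perm_skip; exact P.
    apply Permutation_middle.
Qed.

Inductive kind := Fw | Bw | Cl.
Definition rank k := match k with Fw => 0 | Cl => 1 | Bw => 2 end.

Inductive lconv {A I : Type} (step cliff : I -> relation A) : A -> A -> list (kind * I) -> Prop :=
| lnil x : lconv step cliff x x []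
| lfw a x y z L : step a x y -> lconv step cliff y z L -> lconv step cliff x z ((Fw,a)::L)
| lbw a x y z L : step a y x -> lconv step cliff y z L -> lconv step cliff x z ((Bw,a)::L)
| lcl a x y z L : cliff a x y -> lconv step cliff y z L -> lconv step cliff x z ((Cl,a)::L).

Lemma lconv_app {A I : Type} (step cliff : I -> relation A) x y z L1 L2 :
  lconv step cliff x y L1 -> lconv step cliff y z L2 -> lconv step cliff x z (L1++L2).
Proof.
  intros H1 H2. induction H1; simpl; auto.
  - eapply lfw; eauto. - eapply lbw; eauto. - eapply lcl; eauto.
Qed.

Lemma lconv_split {A I : Type} (step cliff : I -> relation A) x z L1 L2 :
  lconv step cliff x z (L1++L2) -> exists y, lconv step cliff x y L1 /\ lconv step cliff y z L2.
Proof.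
  revert x. induction L1 as [|p L1 IH]; intros x H.
  - exists x. split; auto. constructor.
  - simpl in H. inversion H as [|? ? y0 ? ? Hs Hr|? ? y0 ? ? Hs Hr|? ? y0 ? ? Hs Hr]; subst;
    destruct (IH _ Hr) as [w [H1 H2]]; exists w; split; auto.
    + eapply lfw; eauto. + eapply lbw; eauto. + eapply lcl; eauto.
Qed.

Definition Rk {I : Type} (p q : kind * I) := rank (fst p) <= rank (fst q).

Lemma sh_B {A I : Type} (step cliff : I -> relation A) x z L :
  lconv step cliff x z L -> Forall (fun p => fst p = Bw) L -> clos_refl_trans A (arrow A I step) z x.
Proof.
  intros H. induction H; intros F; inversion F; subst; simpl in *; try discriminate.
  - apply rt_refl.
  - eapply rt_trans. apply IHlconv; auto. apply rt_step. exists a; auto.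
Qed.

Lemma sh_C {A I : Type} (step cliff : I -> relation A) x z L :
  lconv step cliff x z L -> Forall (fun p => 1 <= rank (fst p)) L -> StronglySorted Rk L ->
  comp A (simeq A I cliff) (transp A (clos_refl_trans A (arrow A I step))) x z.
Proof.
  intros H. induction H; intros F S.
  - exists x. split; apply rt_refl.
  - inversion F; subst; simpl in *; lia.
  - exists x. split. apply rt_refl. unfold transp. eapply sh_B. eapply lbw; eauto.
    apply StronglySorted_inv in S. destruct S as [_ S]. constructor; auto.
    eapply Forall_impl; [|exact S]. intros [k g]; unfold Rk; destruct k; simpl; intros; auto; lia.
  - apply StronglySorted_inv in S. destruct S as [S _]. inversion F; subst.
    match goal with Hf : Forall _ L |- _ => destruct (IHlconv Hf S) as [w [H1 H2]] end.
    exists w. split; auto.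
    eapply rt_trans; [|exact H1]. apply rt_step. exists a; auto.
Qed.

Lemma sh_F {A I : Type} (step cliff : I -> relation A) x z L :
  lconv step cliff x z L -> StronglySorted Rk L ->
  comp A (clos_refl_trans A (arrow A I step))
    (comp A (simeq A I cliff) (transp A (clos_refl_trans A (arrow A I step)))) x z.
Proof.
  intros H. induction H; intros S.
  - exists x. split. apply rt_refl. exists x. split; apply rt_refl.
  - apply StronglySorted_inv in S. destruct S as [S _].
    destruct (IHlconv S) as [w [H1 H2]]. exists w. split; auto.
    eapply rt_trans; [|exact H1]. apply rt_step. exists a; auto.
  - exists x. split. apply rt_refl.
    assert (Hl : lconv step cliff x z ((Bw,a)::L)) by (eapply lbw; eauto).
    apply (sh_C step cliff x z _ Hl); auto.
    apply StronglySorted_inv in S as S'. destruct S' as [_ S']. constructor; [simpl; lia|].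
    eapply Forall_impl; [|exact S']. intros [k g]; unfold Rk; destruct k; simpl; intros; lia.
  - exists x. split. apply rt_refl.
    assert (Hl : lconv step cliff x z ((Cl,a)::L)) by (eapply lcl; eauto).
    apply (sh_C step cliff x z _ Hl); auto.
    apply StronglySorted_inv in S as S'. destruct S' as [_ S']. constructor; [simpl; lia|].
    eapply Forall_impl; [|exact S']. intros [k g]; unfold Rk; destruct k; simpl; intros; lia.
Qed.

Lemma sort_or_bad {I : Type} (L : list (kind*I)) :
  StronglySorted Rk L \/ exists P p q Q, L = P ++ p :: q :: Q /\ rank (fst q) < rank (fst p).
Proof.
  induction L as [|p L IH].
  - left; constructor.
  - destruct IH as [S|[P [p' [q [Q [E H]]]]]].
    + destruct L as [|q L']. left; repeat constructor.
      destruct (Compare_dec.le_lt_dec (rank (fst p)) (rank (fst q))) as [le|lt].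
      * left. constructor; auto. inversion S as [|? ? S' F]; subst. constructor; auto.
        eapply Forall_impl; [|exact F]. unfold Rk; intros r Hr; lia.
      * right. exists [], p, q, L'. auto.
    + right. exists (p::P), p', q, Q. rewrite E; auto.
Qed.

Lemma cj_lconv {A I : Type} (step cliff : I -> relation A) J u v :
  clos_refl_trans A (convJ A I step cliff J) u v ->
  exists L, lconv step cliff u v L /\ Forall (fun p => J (snd p)) L.
Proof.
  intros H. induction H as [x y Hs|x|x y z _ [L1 [H1 F1]] _ [L2 [H2 F2]]].
  - destruct Hs as [[g [Jg H]]|[[g [Jg H]]|[g [Jg H]]]].
    + exists [(Bw,g)]. split; auto. eapply lbw; eauto. constructor.
    + exists [(Fw,g)]. split; auto. eapply lfw; eauto. constructor.
    + exists [(Cl,g)]. split; auto. eapply lcl; eauto. constructor.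
  - exists []. split; auto. constructor.
  - exists (L1++L2). split. eapply lconv_app; eauto. apply Forall_app; auto.
Qed.

Lemma crt_sym {A : Type} (R : relation A) :
  (forall x y, R x y -> R y x) -> forall x y, clos_refl_trans A R x y -> clos_refl_trans A R y x.
Proof.
  intros Hs x y H. induction H. apply rt_step; auto. apply rt_refl. eapply rt_trans; eauto.
Qed.

Lemma convJ_sym {A I : Type} (step cliff : I -> relation A) J :
  (forall a, symmetric A (cliff a)) -> forall x y, convJ A I step cliff J x y -> convJ A I step cliff J y x.
Proof.
  intros cs x y [H|[H|[g [Jg H]]]]; unfold convJ; auto.
  right; right. exists g; split; auto. apply cs; auto.
Qed.

Lemma lconv_rev_to {A I : Type} (step cliff : I -> relation A) J :
  (forall a, symmetric A (cliff a)) -> forall u v,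
  clos_refl_trans A (convJ A I step cliff J) v u ->
  exists L, lconv step cliff u v L /\ Forall (fun p => J (snd p)) L.
Proof.
  intros cs u v H. apply cj_lconv. apply crt_sym; auto. apply convJ_sym; auto.
Qed.

Lemma forall_map_snd {I : Type} (P : I -> Prop) (L : list (kind * I)) :
  Forall (fun p => P (snd p)) L -> Forall P (map snd L).
Proof. intros H; induction H; simpl; constructor; auto. Qed.

Lemma main {A I : Type} (step cliff : I -> relation A)
  (cs : forall a, symmetric A (cliff a)) (gt : I -> I -> Prop) (wo : wf_order I gt)
  (Hpc : forall a b : I,
      inclusion A (comp A (transp A (step a)) (step b))
                  (clos_refl_trans A (convJ A I step cliff (vee2 I gt a b))) /\
      inclusion A (comp A (transp A (step a)) (cliff b))
                  (comp A (clos_refl_trans A (convJ A I step cliff (vee1 I gt a)))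
                        (reflc A (transp A (step b))))) :
  forall M x z L, map snd L = M -> lconv step cliff x z L ->
  comp A (clos_refl_trans A (arrow A I step))
    (comp A (simeq A I cliff) (transp A (clos_refl_trans A (arrow A I step)))) x z.
Proof.
  destruct wo as [_ [_ wf]].
  intros M. induction M as [M IH] using (well_founded_induction (wf_clos_trans _ _ (mstep_wf gt wf))).
  intros x z L EM HL.
  destruct (sort_or_bad L) as [S|[P [[k1 a] [[k2 b] [Q [E Hr]]]]]].
  { eapply sh_F; eauto. }
  subst L. apply lconv_split in HL. destruct HL as [u [HP HR]].
  assert (Fin : forall K v, lconv step cliff u v K -> lconv step cliff v z Q ->
            clos_trans _ (mstep gt) (map snd (P ++ K ++ Q)) M ->
            comp A (clos_refl_trans A (arrow A I step))
              (comp A (simeq A I cliff) (transp A (clos_refl_trans A (arrow A I step)))) x z).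
  { intros K v H1 H2 Hm. eapply (IH _ Hm x z (P ++ K ++ Q)); auto.
    eapply lconv_app; eauto. eapply lconv_app; eauto. }
  subst M.
  destruct k1, k2; simpl in Hr; try lia.
  -
    inversion HR as [| |? ? y ? ? Ha HR1|]; subst.
    inversion HR1 as [|? ? v ? ? Hb HR2| |]; subst.
    destruct (Hpc a b) as [Hpk _].
    destruct (cj_lconv _ _ _ _ _ (Hpk u v (ex_intro _ y (conj Ha Hb)))) as [K [HK FK]].
    apply (Fin K v HK HR2). rewrite !map_app. simpl.
    apply forall_map_snd in FK. destruct (split_vee gt a b _ FK) as [Ka [Kb [Pm [Fa Fb]]]].
    apply t_trans with (map snd P ++ Ka ++ b :: map snd Q); apply t_step.
    + exists b, (map snd P ++ Ka ++ map snd Q), Kb. split; [|split; auto].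
      * rewrite !app_assoc. apply Permutation_sym, Permutation_middle.
      * eapply perm_trans. apply Permutation_app_head. apply Permutation_app_tail. exact Pm.
        rewrite <- (app_assoc Ka Kb), (app_assoc (map snd P) Ka), (app_assoc (map snd P) Ka (map snd Q)).
        apply Permutation_app_swap_app.
    + apply ms_replace. exact Fa.
  -
    inversion HR as [| |? ? y ? ? Ha HR1|]; subst.
    inversion HR1 as [| | |? ? v ? ? Hb HR2]; subst.
    destruct (Hpc a b) as [_ Hcl].
    destruct (Hcl u v (ex_intro _ y (conj Ha Hb))) as [w [Hw Hrc]].
    destruct (cj_lconv _ _ _ _ _ Hw) as [K [HK FK]].
    apply forall_map_snd in FK.
    assert (Fa : Forall (gt a) (map snd K)).
    { eapply Forall_impl; [|exact FK]. intros g [h|h]; exact h. }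
    assert (St : mstep gt (map snd P ++ map snd K ++ b :: map snd Q)
                          (map snd P ++ a :: b :: map snd Q)) by (apply ms_replace; auto).
    destruct Hrc as [Ew|Hbw].
    + subst w. apply (Fin K v HK HR2). rewrite !map_app. simpl.
      eapply t_trans; [|apply t_step; exact St]. apply t_step.
      rewrite (app_assoc (map snd P)). rewrite (app_assoc (map snd P) _ (b :: _)).
      replace ((map snd P ++ map snd K) ++ map snd Q)
        with ((map snd P ++ map snd K) ++ [] ++ map snd Q) by reflexivity.
      apply ms_replace. constructor.
    + apply (Fin (K ++ [(Bw,b)]) v).
      * eapply lconv_app; eauto. eapply lbw; eauto. constructor.
      * exact HR2.
      * rewrite !map_app. simpl. rewrite <- app_assoc. simpl. apply t_step; exact St.
  -
    inversion HR as [| | |? ? y ? ? Ha HR1]; subst.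
    inversion HR1 as [|? ? v ? ? Hb HR2| |]; subst.
    destruct (Hpc b a) as [_ Hcl].
    destruct (Hcl v u (ex_intro _ y (conj Hb (cs _ _ _ Ha)))) as [w [Hw Hrc]].
    destruct (lconv_rev_to _ _ _ cs _ _ Hw) as [K [HK FK]].
    apply forall_map_snd in FK.
    assert (Fa : Forall (gt b) (map snd K)).
    { eapply Forall_impl; [|exact FK]. intros g [h|h]; exact h. }
    assert (St : mstep gt ((map snd P ++ [a]) ++ map snd K ++ map snd Q)
                          ((map snd P ++ [a]) ++ b :: map snd Q)) by (apply ms_replace; auto).
    rewrite <- !app_assoc in St. simpl in St.
    destruct Hrc as [Ew|Hbw].
    + subst w. apply (Fin K v HK HR2). rewrite !map_app. simpl.
      eapply t_trans; [|apply t_step; exact St]. apply t_step.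
      replace (map snd P ++ map snd K ++ map snd Q)
        with (map snd P ++ [] ++ (map snd K ++ map snd Q)) by reflexivity.
      apply ms_replace. constructor.
    + apply (Fin ((Fw,a) :: K) v).
      * eapply lfw; eauto.
      * exact HR2.
      * rewrite !map_app. simpl. apply t_step; exact St.
Qed.

Lemma conv_lconv {A I : Type} (step cliff : I -> relation A) x y :
  clos_refl_trans A (conv A I step cliff) x y -> exists L, lconv step cliff x y L.
Proof.
  intros H. induction H as [x y Hs|x|x y z _ [L1 H1] _ [L2 H2]].
  - destruct Hs as [[g H]|[[g H]|H]].
    + exists [(Bw,g)]. eapply lbw; eauto. constructor.
    + exists [(Fw,g)]. eapply lfw; eauto. constructor.
    + induction H as [x y [g Hg]|x|x y z _ [L1 H1] _ [L2 H2]].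
      * exists [(Cl,g)]. eapply lcl; eauto. constructor.
      * exists []. constructor.
      * exists (L1++L2). eapply lconv_app; eauto.
  - exists []. constructor.
  - exists (L1++L2). eapply lconv_app; eauto.
Qed.

Theorem theorem3p7 (A I : Type) (step : I -> relation A) (cliff : I -> relation A)
  (cliff_sym : forall a : I, symmetric A (cliff a)) :
  peak_and_cliff_decreasing A I step cliff ->
  church_rosser_modulo A I step cliff.
Proof.
  intros [gt [wo Hpc]] x y H.
  destruct (conv_lconv step cliff x y H) as [L HL].
  eapply (main step cliff cliff_sym gt wo Hpc (map snd L) x y L); eauto.
Qed.
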